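(* Let $r\ge1$ be an integer, let $\Gamma$ be a finite graph without loops (edges oriented if $r$ is odd), and let $e$ be an edge of $\Gamma$ such that there is a different edge $e'$ of $\Gamma$ with the same two endpoints as $e$. Then the rings $R^r(\Gamma)$ and $R^r(\Gamma\setminus e)$ are isomorphic.
   Context: A circuit $w$ of length $k$ in a graph is an ordered sequence of edges $w_1,\dots,w_k$ with vertices $v_1,\dots,v_k,v_{k+1}=v_1$ such that $v_i,v_{i+1}$ are the endpoints of $w_i$; for $r$ odd, $\epsilon_i(w)=1$ if $w_i$ is oriented from $v_i$ to $v_{i+1}$ and $-1$ otherwise. $\Lambda^r(\Gamma)$: for $r$ even, the free graded-commutative $\mathbb{Z}$-algebra on generators $e_\beta$ of degree $r-1$, one per edge; for $r$ odd, the commutative graded $\mathbb{Z}$-algebra on such generators modulo $e_\beta^2=0$. Arnold class: $A(w)=\sum_i(-1)^i w_1\cdots\widehat{w_i}\cdots w_k$ ($r$ even), $A(w)=\sum_i\epsilon_i(w) w_1\cdots\widehat{w_i}\cdots w_k$ ($r$ odd), where $w_i$ stands for $e_{w_i}$; $A(w)=1$ for a one-edge circuit (loop). $R^r(\Gamma)=\Lambda^r(\Gamma)/I^r(\Gamma)$ where $I^r(\Gamma)$ is the ideal generated by all Arnold classes. $\Gamma\setminus e$ is $\Gamma$ with the edge $e$ deleted. *)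

(* Defs.v *)
From HB Require Import structures.
From mathcomp Require Import all_boot all_order all_algebra.
Set Implicit Arguments. Unset Strict Implicit. Unset Printing Implicit Defensive.
Import Order.TTheory GRing.Theory Num.Theory.
Local Open Scope ring_scope.

(* A finite graph without loops is given by finite types of vertices V and
   edges E and a map [ends : E -> V * V]; edge b goes from (ends b).1 to
   (ends b).2 (the orientation is only used when r is odd). *)

Section Algebra.
Variables (V E : finType) (ends : E -> V * V) (r : nat).

(* Lambda^r(Gamma): the free Z-module with basis e_S, S a set of edges, where
   e_S is the product of the generators of S taken in increasing order
   (w.r.t. the fixed order enum_rank on E).  For r even (odd-degree
   generators) this is the exterior algebra; for r odd it is the commutative
   algebra with e_b^2 = 0. *)
Local Notation Lam := {ffun {set E} -> int}.

(* sign of e_S * e_T = sgnST * e_(S u T) for disjoint S, T *)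
Definition sgnST (S T : {set E}) : int :=
  if odd r then 1
  else (-1) ^+ #|[set p : E * E | (p.1 \in S) && (p.2 \in T)
                                  && (enum_rank p.2 < enum_rank p.1)%N]|.

Definition lmul (a b : Lam) : Lam :=
  [ffun U => \sum_(S : {set E}) \sum_(T : {set E})
     if (S :&: T == set0) && (S :|: T == U) then sgnST S T * a S * b T else 0].

Definition lone : Lam := [ffun S => ((S == set0) : nat)%:Z].
Definition gen (b : E) : Lam := [ffun S => ((S == [set b]) : nat)%:Z].

Definition prodl (l : seq E) : Lam := foldr lmul lone (map gen l).

(* A circuit of length k is encoded as a sequence of triples (w_i, (v_i, v_{i+1}))
   with v_{k+1} = v_1, and {v_i, v_{i+1}} the endpoints of w_i. *)
Definition circuit (c : seq (E * (V * V))) : bool :=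
  [&& (0 < size c)%N,
      map (fun t => t.2.2) c == rot 1 (map (fun t => t.2.1) c)
    & all (fun t => (ends t.1 == t.2) || (ends t.1 == (t.2.2, t.2.1))) c].

Definition eps (c : seq (E * (V * V))) (i : nat) : int :=
  if onth c i is Some t then (if ends t.1 == t.2 then 1 else -1) else 0.

(* Arnold class; index i is 0-based here, so (-1)^i becomes (-1)^(i+1) *)
Definition arnold (c : seq (E * (V * V))) : Lam :=
  \sum_(i < size c)
     [ffun S => (if odd r then eps c i else (-1) ^+ i.+1) *
                 prodl (map fst (take i c ++ drop i.+1 c)) S].

Definition inI (z : Lam) : Prop :=
  exists s : seq (Lam * seq (E * (V * V)) * Lam),
    all (fun t => circuit t.1.2) s /\
    z = \sum_(t <- s) lmul (lmul t.1.1 (arnold t.1.2)) t.2.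

End Algebra.

Notation Lam E := {ffun {set E} -> int}.

(* The ring isomorphism R^r(Gamma1) = Lam1/I1  ~=  R^r(Gamma2) = Lam2/I2,
   expressed through set-theoretic lifts f, g of mutually inverse maps
   between the quotients, which are well defined and ring morphisms. *)
Definition quot_ring_hom (V E1 E2 : finType) (en1 : E1 -> V * V)
    (en2 : E2 -> V * V) (r : nat) (f : Lam E1 -> Lam E2) : Prop :=
  [/\ forall x y, inI en1 r (x - y) -> inI en2 r (f x - f y),
      forall x y, inI en2 r (f (x + y) - (f x + f y)),
      forall x y, inI en2 r (f (lmul r x y) - lmul r (f x) (f y))
    & inI en2 r (f (lone E1) - lone E2)].

Definition R_iso (V E1 E2 : finType) (en1 : E1 -> V * V)
    (en2 : E2 -> V * V) (r : nat) : Prop :=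
  exists (f : Lam E1 -> Lam E2) (g : Lam E2 -> Lam E1),
    [/\ quot_ring_hom en1 en2 r f, quot_ring_hom en2 en1 r g,
        forall x, inI en1 r (g (f x) - x)
      & forall y, inI en2 r (f (g y) - y)].

Definition del_ends (V E : finType) (ends : E -> V * V) (e : E) :
  {b : E | b != e} -> V * V := fun b => ends (val b).
Arguments del_ends {V E} ends e.

(* Main.v *)
Require Import Defs.
From HB Require Import structures.
From mathcomp Require Import all_boot all_order all_algebra.
From mathcomp Require Import ring.
Set Implicit Arguments. Unset Strict Implicit. Unset Printing Implicit Defensive.
Import Order.TTheory GRing.Theory Num.Theory.
Local Open Scope ring_scope.

Section Gen.
Variables (E : finType) (r : nat).
Implicit Types (x y z : Lam E) (S T U : {set E}).

Definition basis (S : {set E}) : Lam E := [ffun T => ((T == S) : nat)%:Z].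
Definition sc (k : int) (x : Lam E) : Lam E := [ffun S => k * x S].

Lemma scDr k x y : sc k (x + y) = sc k x + sc k y.
Proof. by apply/ffunP=> S; rewrite !ffunE mulrDr. Qed.
Lemma scDl k l x : sc (k + l) x = sc k x + sc l x.
Proof. by apply/ffunP=> S; rewrite !ffunE mulrDl. Qed.
Lemma sc0r k : sc k 0 = 0.
Proof. by apply/ffunP=> S; rewrite !ffunE mulr0. Qed.
Lemma sc0l x : sc 0 x = 0.
Proof. by apply/ffunP=> S; rewrite !ffunE mul0r. Qed.
Lemma scBr k x y : sc k (x - y) = sc k x - sc k y.
Proof. by apply/ffunP=> S; rewrite !ffunE mulrBr. Qed.
Lemma sc1 x : sc 1 x = x.
Proof. by apply/ffunP=> S; rewrite !ffunE mul1r. Qed.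
Lemma scA k l x : sc k (sc l x) = sc (k * l) x.
Proof. by apply/ffunP=> S; rewrite !ffunE mulrA. Qed.
Lemma scN1 x : sc (-1) x = - x.
Proof. by apply/ffunP=> S; rewrite !ffunE mulN1r. Qed.
Lemma sc_sumr (I : Type) (s : seq I) (P : pred I) k (F : I -> Lam E) :
  sc k (\sum_(i <- s | P i) F i) = \sum_(i <- s | P i) sc k (F i).
Proof. exact: (big_morph (sc k) (scDr k) (sc0r k)). Qed.
Lemma sc_suml (I : Type) (s : seq I) (P : pred I) (k : I -> int) x :
  sc (\sum_(i <- s | P i) k i) x = \sum_(i <- s | P i) sc (k i) x.
Proof. exact: (big_morph (sc^~ x) (fun k l => scDl k l x) (sc0l x)). Qed.

Lemma lmulDl x y z : lmul r (x + y) z = lmul r x z + lmul r y z.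
Proof.
apply/ffunP=> U; rewrite !ffunE -big_split; apply: eq_bigr => S _.
rewrite -big_split; apply: eq_bigr => T _; case: ifP; rewrite ?addr0 // => _.
by rewrite ffunE mulrDr mulrDl.
Qed.
Lemma lmulDr x y z : lmul r x (y + z) = lmul r x y + lmul r x z.
Proof.
apply/ffunP=> U; rewrite !ffunE -big_split; apply: eq_bigr => S _.
rewrite -big_split; apply: eq_bigr => T _; case: ifP; rewrite ?addr0 // => _.
by rewrite ffunE mulrDr.
Qed.
Lemma lmul0l y : lmul r 0 y = 0.
Proof.
apply/ffunP=> U; rewrite !ffunE big1 // => S _; rewrite big1 // => T _.
by case: ifP => // _; rewrite ffunE mulr0 mul0r.
Qed.
Lemma lmul0r y : lmul r y 0 = 0.
Proof.
apply/ffunP=> U; rewrite !ffunE big1 // => S _; rewrite big1 // => T _.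
by case: ifP => // _; rewrite ffunE mulr0.
Qed.
Lemma lmul_scl k x y : lmul r (sc k x) y = sc k (lmul r x y).
Proof.
apply/ffunP=> U; rewrite !ffunE mulr_sumr; apply: eq_bigr => S _.
rewrite mulr_sumr; apply: eq_bigr => T _; case: ifP; rewrite ?mulr0 // => _.
by rewrite ffunE; ring.
Qed.
Lemma lmul_scr k x y : lmul r x (sc k y) = sc k (lmul r x y).
Proof.
apply/ffunP=> U; rewrite !ffunE mulr_sumr; apply: eq_bigr => S _.
rewrite mulr_sumr; apply: eq_bigr => T _; case: ifP; rewrite ?mulr0 // => _.
by rewrite ffunE; ring.
Qed.
Lemma lmulNl x y : lmul r (- x) y = - lmul r x y.
Proof. by rewrite -!scN1 lmul_scl. Qed.
Lemma lmulNr x y : lmul r x (- y) = - lmul r x y.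
Proof. by rewrite -!scN1 lmul_scr. Qed.
Lemma lmulBl x y z : lmul r (x - y) z = lmul r x z - lmul r y z.
Proof. by rewrite lmulDl lmulNl. Qed.
Lemma lmulBr x y z : lmul r x (y - z) = lmul r x y - lmul r x z.
Proof. by rewrite lmulDr lmulNr. Qed.
Lemma lmul_suml (I : Type) (s : seq I) (P : pred I) (F : I -> Lam E) y :
  lmul r (\sum_(i <- s | P i) F i) y = \sum_(i <- s | P i) lmul r (F i) y.
Proof. exact: (big_morph (fun x => lmul r x y) (fun a b => lmulDl a b y) (lmul0l y)). Qed.
Lemma lmul_sumr (I : Type) (s : seq I) (P : pred I) (F : I -> Lam E) y :
  lmul r y (\sum_(i <- s | P i) F i) = \sum_(i <- s | P i) lmul r y (F i).
Proof. exact: (big_morph (fun x => lmul r y x) (lmulDr y) (lmul0r y)). Qed.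

Lemma expand (x : Lam E) : x = \sum_S sc (x S) (basis S).
Proof.
apply/ffunP=> U; rewrite sum_ffunE (bigD1 U) //= big1 => [|S nS].
  by rewrite !ffunE eqxx mulr1 addr0.
by rewrite !ffunE eq_sym (negbTE nS) mulr0.
Qed.

Lemma lmul_basis S T : lmul r (basis S) (basis T) =
  if S :&: T == set0 then sc (sgnST r S T) (basis (S :|: T)) else 0.
Proof.
apply/ffunP=> U; rewrite ffunE (bigD1 S) //=.
rewrite [X in _ + X]big1 => [|S' nS]; last first.
  by apply: big1 => T' _; case: ifP => // _; rewrite ffunE (negbTE nS) mulr0 mul0r.
rewrite addr0 (bigD1 T) //= [X in _ + X]big1 => [|T' nT]; last first.
  by case: ifP => // _; rewrite [basis T T']ffunE (negbTE nT) mulr0.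
rewrite !ffunE !eqxx !mulr1 !addr0.
case: (S :&: T == set0); rewrite /= ?ffunE //.
by rewrite eq_sym; case: (U == S :|: T); rewrite ?mulr1 ?mulr0.
Qed.

Lemma basis_lone : lone E = basis set0. Proof. by []. Qed.
Lemma gen_basis b : gen b = basis [set b]. Proof. by []. Qed.

End Gen.

Section LmapS.
Variables (E E2 : finType) (r : nat).
Implicit Types (x y : Lam E) (S T U : {set E}) (B : {set E} -> Lam E2).

Definition Lmap B x : Lam E2 := \sum_S sc (x S) (B S).

Lemma Lmap_add B x y : Lmap B (x + y) = Lmap B x + Lmap B y.
Proof. by rewrite /Lmap -big_split; apply: eq_bigr => S _; rewrite ffunE scDl. Qed.
Lemma Lmap0 B : Lmap B 0 = 0.
Proof. by rewrite /Lmap big1 // => S _; rewrite ffunE sc0l. Qed.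
Lemma Lmap_sc B k x : Lmap B (sc k x) = sc k (Lmap B x).
Proof. by rewrite /Lmap sc_sumr; apply: eq_bigr => S _; rewrite ffunE scA. Qed.
Lemma Lmap_opp B x : Lmap B (- x) = - Lmap B x.
Proof. by rewrite -!scN1 Lmap_sc. Qed.
Lemma Lmap_sub B x y : Lmap B (x - y) = Lmap B x - Lmap B y.
Proof. by rewrite Lmap_add Lmap_opp. Qed.
Lemma Lmap_sum B (I : Type) (s : seq I) (P : pred I) (F : I -> Lam E) :
  Lmap B (\sum_(i <- s | P i) F i) = \sum_(i <- s | P i) Lmap B (F i).
Proof. exact: (big_morph (Lmap B) (Lmap_add B) (Lmap0 B)). Qed.
Lemma Lmap_basis B S : Lmap B (basis S) = B S.
Proof.
rewrite /Lmap (bigD1 S) //= [X in _ + X]big1 => [|S' nS].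
  by rewrite ffunE eqxx sc1 addr0.
by rewrite ffunE (negbTE nS) sc0l.
Qed.

Definition Bmul B := forall S T, lmul r (B S) (B T) =
  if S :&: T == set0 then sc (sgnST r S T) (B (S :|: T)) else 0.

Lemma Lmap_mul B : Bmul B -> forall x y,
  Lmap B (lmul r x y) = lmul r (Lmap B x) (Lmap B y).
Proof.
move=> HB x y.
have -> : lmul r (Lmap B x) (Lmap B y) =
    \sum_S \sum_T lmul r (sc (x S) (B S)) (sc (y T) (B T)).
  by rewrite /Lmap lmul_suml; apply: eq_bigr => S _; rewrite lmul_sumr.
rewrite /Lmap.
under eq_bigr => U _ do rewrite ffunE sc_suml.
under eq_bigr => U _ do under eq_bigr => S _ do rewrite sc_suml.
rewrite exchange_big; apply: eq_bigr => S _; rewrite exchange_big.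
apply: eq_bigr => T _.
rewrite lmul_scl lmul_scr HB.
case: ifP => H.
  rewrite (bigD1 (S :|: T)) //= [X in _ + X]big1 => [|U nU]; last first.
    by rewrite eq_sym (negbTE nU) sc0l.
  rewrite eqxx addr0 !scA; congr (sc _ _); ring.
by rewrite big1 ?sc0r // => U _; rewrite sc0l.
Qed.

End LmapS.

Lemma Bmul_comp (E E2 E3 : finType) r (B1 : {set E2} -> Lam E3)
  (B : {set E} -> Lam E2) :
  Bmul r B1 -> Bmul r B -> Bmul r (fun S => Lmap B1 (B S)).
Proof.
move=> H1 H S T /=; rewrite -Lmap_mul // H.
by case: ifP => _; [rewrite Lmap_sc | rewrite Lmap0].
Qed.

Section InI.
Variables (V E : finType) (ends : E -> V * V) (r : nat).
Implicit Types (x y : Lam E).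

Lemma inI0 : inI ends r 0.
Proof. by exists [::]; split => //; rewrite big_nil. Qed.
Lemma inID x y : inI ends r x -> inI ends r y -> inI ends r (x + y).
Proof.
move=> [s1 [h1 ->]] [s2 [h2 ->]]; exists (s1 ++ s2).
by rewrite all_cat h1 h2 big_cat.
Qed.
Lemma inI_sc k x : inI ends r x -> inI ends r (sc k x).
Proof.
move=> [s [h ->]]; exists (map (fun t => (sc k t.1.1, t.1.2, t.2)) s); split.
  by rewrite all_map.
by rewrite big_map sc_sumr; apply: eq_bigr => t _ /=; rewrite !lmul_scl.
Qed.
Lemma inIN x : inI ends r x -> inI ends r (- x).
Proof. by rewrite -scN1; apply: inI_sc. Qed.
Lemma inIB x y : inI ends r x -> inI ends r y -> inI ends r (x - y).
Proof. by move=> hx hy; apply: inID => //; apply: inIN. Qed.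
Lemma inI_sum (I : Type) (s : seq I) (P : pred I) (F : I -> Lam E) :
  (forall i, P i -> inI ends r (F i)) -> inI ends r (\sum_(i <- s | P i) F i).
Proof.
move=> H; elim: s => [|a s IH]; first by rewrite big_nil; apply: inI0.
rewrite big_cons; case: ifP => Pa //; exact: inID (H a Pa) IH.
Qed.
Lemma inI_gen a c b : circuit ends c ->
  inI ends r (lmul r (lmul r a (arnold ends r c)) b).
Proof. by move=> hc; exists [:: (a, c, b)]; rewrite /= hc big_seq1. Qed.
End InI.

Lemma inI_map (V E1 E2 : finType) (en1 : E1 -> V * V) (en2 : E2 -> V * V) r
  (B : {set E1} -> Lam E2) : Bmul r B ->
  (forall c, circuit en1 c -> exists k c', circuit en2 c' /\
      Lmap B (arnold en1 r c) = sc k (arnold en2 r c')) ->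
  forall z, inI en1 r z -> inI en2 r (Lmap B z).
Proof.
move=> HB Ha z [s [hs ->]]; rewrite Lmap_sum big_seq; apply: inI_sum => t ts.
have [k [c' [hc' eq]]] := Ha _ (allP hs t ts).
rewrite !(Lmap_mul HB) eq lmul_scr -lmul_scl; exact: inI_gen.
Qed.

Section Signs.
Variables (E : finType) (r : nat).
Implicit Types (S T A B C X : {set E}).

Definition inv S T : nat :=
  \sum_(a in S) \sum_(b in T) (enum_rank b < enum_rank a)%N.

Lemma sgnE S T : sgnST r S T = if odd r then 1 else (-1) ^+ inv S T.
Proof.
rewrite /sgnST; case: ifP => // _; congr (_ ^+ _).
rewrite -sum1dep_card /inv pair_big /= big_mkcondr /=.
by apply: eq_bigr => p _; case: ltnP.
Qed.

Lemma sum_setU (F : E -> nat) A B : A :&: B == set0 ->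
  \sum_(a in A :|: B) F a = \sum_(a in A) F a + \sum_(a in B) F a.
Proof.
move=> /eqP AB.
rewrite [LHS]big_mkcond [X in X + _]big_mkcond [X in _ + X]big_mkcond -big_split.
apply: eq_bigr => a _; rewrite inE.
have : a \in A :&: B = false by rewrite AB inE.
rewrite inE; case: (a \in A); case: (a \in B) => //= _; by rewrite ?addr0 ?add0r.
Qed.

Lemma inv_setUl A B C : A :&: B == set0 -> inv (A :|: B) C = (inv A C + inv B C)%N.
Proof. by move=> H; rewrite /inv sum_setU. Qed.
Lemma inv_setUr A B C : B :&: C == set0 -> inv A (B :|: C) = (inv A B + inv A C)%N.
Proof. by move=> H; rewrite /inv -big_split; apply: eq_bigr => a _; rewrite sum_setU. Qed.

Lemma inv_swap a X : a \notin X -> (inv X [set a] + inv [set a] X)%N = #|X|.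
Proof.
move=> aX; rewrite /inv big_set1.
under eq_bigr => x _ do rewrite big_set1.
rewrite -big_split /= -[RHS]sum1_card; apply: eq_bigr => x xX /=.
case: ltngtP => //= h; move/val_inj/enum_rank_inj: h => h.
by rewrite h xX in aX.
Qed.

Lemma sgnUl A B C : A :&: B == set0 -> sgnST r (A :|: B) C = sgnST r A C * sgnST r B C.
Proof. by move=> H; rewrite !sgnE inv_setUl //; case: ifP; rewrite ?mulr1 ?exprD. Qed.
Lemma sgnUr A B C : B :&: C == set0 -> sgnST r A (B :|: C) = sgnST r A B * sgnST r A C.
Proof. by move=> H; rewrite !sgnE inv_setUr //; case: ifP; rewrite ?mulr1 ?exprD. Qed.

Lemma sign_sq (n : nat) : (-1) ^+ n * (-1) ^+ n = 1 :> int.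
Proof. by rewrite -exprD -signr_odd addnn odd_double expr0. Qed.

Lemma sgn_sq S T : sgnST r S T * sgnST r S T = 1.
Proof. by rewrite sgnE; case: ifP; rewrite ?mulr1 // sign_sq. Qed.

Lemma sgn_swap2 a b X : a \notin X -> b \notin X ->
  sgnST r X [set a] * sgnST r [set a] X * (sgnST r X [set b] * sgnST r [set b] X) = 1.
Proof.
move=> aX bX; rewrite !sgnE; case: ifP => _; first by rewrite !mulr1.
by rewrite -!exprD !inv_swap // exprD sign_sq.
Qed.

Lemma sgn_zero A B : inv A B = 0%N -> sgnST r A B = 1.
Proof. by move=> H; rewrite sgnE H; case: ifP. Qed.

Lemma sgn0r S : sgnST r S set0 = 1.
Proof. by apply: sgn_zero; rewrite /inv big1 // => a _; rewrite big_set0. Qed.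
Lemma sgn0l S : sgnST r set0 S = 1.
Proof. by apply: sgn_zero; rewrite /inv big_set0. Qed.

End Signs.
Lemma index_filter (T : eqType) (P : pred T) (s : seq T) x y : P x -> P y ->
  (index x (filter P s) < index y (filter P s))%N = (index x s < index y s)%N.
Proof.
move=> Px Py; elim: s => [|z s IH] //=.
case Pz: (P z) => /=.
  by case: (z == x); case: (z == y) => //=; rewrite ltnS.
have zx : (z == x) = false by apply/negbTE; apply: contraFneq Pz => ->.
have zy : (z == y) = false by apply/negbTE; apply: contraFneq Pz => ->.
by rewrite zx zy ltnS.
Qed.
Lemma rankE (T : finType) (x : T) : (enum_rank x : nat) = index x (enum T).
Proof.
have h := nth_enum_rank x x.
transitivity (index (nth x (enum T) (enum_rank x)) (enum T)); last by rewrite h.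
by rewrite index_uniq ?enum_uniq // -cardE ltn_ord.
Qed.

Lemma fix4 (a b u v : int) : u = 1 -> v = 1 -> a * u = b * v -> a = b.
Proof. by move=> -> ->; rewrite !mulr1. Qed.

Lemma set1I0 (T : finType) (x : T) (A : {set T}) : x \notin A -> [set x] :&: A == set0.
Proof.
move=> xA; apply/eqP/setP=> y; rewrite !inE.
by case: (eqVneq y x) => [->|]; rewrite ?(negbTE xA).
Qed.
Lemma disj_mem (T : finType) (x : T) (X Y : {set T}) :
  x \in X -> x \in Y -> (X :&: Y == set0) = false.
Proof. by move=> xX xY; apply/negbTE/set0Pn; exists x; rewrite inE xX. Qed.
Lemma setI1U (T : finType) (x : T) (A B : {set T}) : x \notin B -> (x |: A) :&: B = A :&: B.
Proof.
move=> xB; apply/setP=> y; rewrite !inE.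
by case: (eqVneq y x) => [->|]; rewrite ?(negbTE xB) ?andbF.
Qed.
Lemma setI1Ur (T : finType) (x : T) (A B : {set T}) : x \notin A -> A :&: (x |: B) = A :&: B.
Proof. by move=> xA; rewrite setIC setI1U // setIC. Qed.

Lemma prodl_nil (T : finType) r : prodl r [::] = lone T.
Proof. by []. Qed.
Lemma prodl_cons (T : finType) r (b : T) l : prodl r (b :: l) = lmul r (gen b) (prodl r l).
Proof. by []. Qed.
Lemma lmul_lone (T : finType) r (b : T) : lmul r (gen b) (lone T) = gen b.
Proof.
by rewrite gen_basis basis_lone lmul_basis setI0 eqxx sgn0r sc1 setU0.
Qed.
Lemma prodl1 (T : finType) r (b : T) : prodl r [:: b] = gen b.
Proof. by rewrite prodl_cons prodl_nil lmul_lone. Qed.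

Definition acoef (V T : finType) (en : T -> V * V) r c i : int :=
  if odd r then eps en c i else (-1) ^+ i.+1.

Lemma arnoldE (V T : finType) (en : T -> V * V) r c : arnold en r c =
  \sum_(0 <= i < size c) sc (acoef en r c i) (prodl r (map fst (take i c ++ drop i.+1 c))).
Proof. by rewrite /arnold big_mkord. Qed.

Lemma count_td (T : Type) (a : pred T) s i x0 : (i < size s)%N ->
  (count a (take i s ++ drop i.+1 s) + a (nth x0 s i))%N = count a s.
Proof.
move=> hi; rewrite -[in RHS](cat_take_drop i s) (drop_nth x0 hi) !count_cat /=.
by rewrite addnAC addnA.
Qed.

Lemma onth_lt (T : Type) (s : seq T) i x0 : (i < size s)%N -> onth s i = Some (nth x0 s i).
Proof. by move=> hi; rewrite onthE (nth_map x0). Qed.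

Lemma decomp (T : finType) r (S : {set T}) x : x \in S ->
  basis S = lmul r (lmul r (basis [set y in S | (enum_rank y < enum_rank x)%N]) (gen x))
                   (basis [set y in S | (enum_rank x < enum_rank y)%N]).
Proof.
move=> xS; rewrite gen_basis lmul_basis.
have -> : [set y in S | (enum_rank y < enum_rank x)%N] :&: [set x] == set0.
  apply/eqP/setP => y; rewrite !inE.
  by case: (eqVneq y x) => [->|]; rewrite ?ltnn ?andbF.
rewrite sgn_zero ?sc1; last first.
  rewrite /inv big1 // => a; rewrite inE => /andP[_ h]; rewrite big_set1.
  by rewrite ltnNge ltnW.
rewrite lmul_basis.
have -> : ([set y in S | (enum_rank y < enum_rank x)%N] :|: [set x])
    :&: [set y in S | (enum_rank x < enum_rank y)%N] == set0.
  apply/eqP/setP => y; rewrite !inE.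
  case: (eqVneq y x) => [->|_]; rewrite ?ltnn ?andbF ?orbF //=.
  by case: (y \in S) => //=; case: ltngtP.
rewrite sgn_zero ?sc1; last first.
  rewrite /inv big1 // => a; rewrite !inE => ha; apply: big1 => b; rewrite inE => /andP[_ hb].
  have : (enum_rank a <= enum_rank x)%N.
    by case/orP: ha => [/andP[_ /ltnW //]|/eqP ->].
  by move=> hax; rewrite ltnNge (leq_trans hax (ltnW hb)).
congr basis; apply/setP => y; rewrite !inE.
case: (eqVneq y x) => [->|nyx]; first by rewrite xS ltnn.
case: (y \in S) => //=.
case: ltngtP => //= h.
by move/val_inj/enum_rank_inj: h => h; rewrite h eqxx in nyx.
Qed.

Lemma sign_pair (V : finType) (p q t : V * V) : p.1 != p.2 ->
  (q == p) || (q == (p.2, p.1)) -> (p == t) || (p == (t.2, t.1)) ->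
  (if p == t then 1 else -1 : int) = (if q == p then 1 else -1) * (if q == t then 1 else -1).
Proof.
case: p q t => [a b] [c d] [x y] /= ab.
have ba : b != a by rewrite eq_sym.
rewrite !xpair_eqE.
case/orP => /andP[/eqP -> /eqP ->]; case/orP => /andP[/eqP <- /eqP <-];
  by rewrite ?eqxx ?(negbTE ab) ?(negbTE ba).
Qed.

Lemma par_pair (V : finType) (p q t : V * V) :
  (q == p) || (q == (p.2, p.1)) -> (p == t) || (p == (t.2, t.1)) ->
  (q == t) || (q == (t.2, t.1)).
Proof.
case: p q t => [a b] [c d] [x y] /=; rewrite !xpair_eqE.
case/orP => /andP[/eqP -> /eqP ->]; case/orP => /andP[/eqP <- /eqP <-];
  by rewrite ?eqxx ?orbT.
Qed.

Lemma swap_neq (V : finType) (p : V * V) : p.1 != p.2 -> (p == (p.2, p.1)) = false.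
Proof. by case: p => a b /= ab; rewrite xpair_eqE (negbTE ab). Qed.


Section Main.
Variables (V E : finType) (ends : E -> V * V) (r : nat) (e e' : E).
Hypothesis he' : e' != e.
Implicit Types (S T A B : {set E}).

Local Notation E' := ({b : E | b != e} : finType).

Lemma enum_sub : map val (enum E') = filter (fun b => b != e) (enum E).
Proof.
rewrite enumT unlock /=.
rewrite /Builders_26.sub_enum.
rewrite (pmap_filter (@insubK _ _ _)) -enumT.
by apply: eq_filter => x; apply: isSome_insub.
Qed.

Lemma rank_sub (b1 b2 : E') :
  (enum_rank b1 < enum_rank b2)%N = (enum_rank (val b1) < enum_rank (val b2))%N.
Proof.
rewrite !rankE -!(index_map val_inj) enum_sub index_filter //; [exact: (svalP b1) | exact: (svalP b2)].
Qed.

Lemma inv_val (A B : {set E'}) : inv (val @: A) (val @: B) = inv A B.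
Proof.
rewrite /inv big_imset /=; last by move=> ? ? _ _; apply: val_inj.
apply: eq_bigr => a _; rewrite big_imset /=; last by move=> ? ? _ _; apply: val_inj.
by apply: eq_bigr => b _; rewrite rank_sub.
Qed.

Lemma sgn_val (A B : {set E'}) : sgnST r (val @: A) (val @: B) = sgnST r A B.
Proof. by rewrite !sgnE inv_val. Qed.

Definition pre (S : {set E}) : {set E'} := [set b : E' | val b \in S].

Lemma im_pre S : e \notin S -> val @: pre S = S.
Proof.
move=> eS; apply/setP=> x; apply/imsetP/idP => [[b]|xS].
  by rewrite inE => bS ->.
have xe : x != e by apply: contraNneq eS => <-.
by exists (Sub x xe); rewrite ?inE.
Qed.
Lemma pre_im (A : {set E'}) : pre (val @: A) = A.
Proof. by apply/setP=> b; rewrite inE mem_imset //; exact: val_inj. Qed.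
Lemma preI S T : pre (S :&: T) = pre S :&: pre T.
Proof. by apply/setP=> b; rewrite !inE. Qed.
Lemma preU S T : pre (S :|: T) = pre S :|: pre T.
Proof. by apply/setP=> b; rewrite !inE. Qed.
Lemma pre0 : pre set0 = set0.
Proof. by apply/setP=> b; rewrite !inE. Qed.
Lemma pre_eq0 S : e \notin S -> (pre S == set0) = (S == set0).
Proof.
move=> eS; apply/eqP/eqP => [h|->]; last exact: pre0.
by rewrite -(im_pre eS) h imset0.
Qed.

Definition Brho (S : {set E}) : Lam E' := if e \in S then 0 else basis (pre S).

Lemma Bmul_rho : Bmul r Brho.
Proof.
move=> S T; rewrite /Brho.
case eS: (e \in S).
  by rewrite lmul0l inE eS /=; case: ifP => _; rewrite ?sc0r.
case eT: (e \in T).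
  by rewrite lmul0r inE eT orbT /=; case: ifP => _; rewrite ?sc0r.
rewrite lmul_basis -preI pre_eq0; last by rewrite inE eS.
case: ifP => // _; rewrite inE eS eT /= -preU.
by rewrite -sgn_val !im_pre ?eS ?eT.
Qed.

Definition Biota (S : {set E'}) : Lam E := basis (val @: S).

Lemma Bmul_iota : Bmul r Biota.
Proof.
move=> A B; rewrite /Biota lmul_basis -imsetI; last by move=> ? ? _ _; apply: val_inj.
by rewrite imset_eq0 -imsetU sgn_val.
Qed.

Definition sigma : int :=
  if odd r then (if ends e' == ends e then 1 else -1) else 1.
Definition zeta (S : {set E}) : int :=
  sgnST r (S :\ e) [set e] * sgnST r (S :\ e) [set e'].
Definition sb (S : {set E}) : Lam E :=
  if e \in S then (if e' \in S then 0 else sc (sigma * zeta S) (basis (e' |: (S :\ e))))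
  else basis S.

Lemma sbA S : e \notin S -> sb S = basis S.
Proof. by move=> eS; rewrite /sb (negbTE eS). Qed.
Lemma sbE A : e \notin A -> sb (e |: A) = if e' \in A then 0 else
  sc (sigma * (sgnST r A [set e] * sgnST r A [set e'])) (basis (e' |: A)).
Proof. by move=> eA; rewrite /sb setU11 in_setU1 (negbTE he') /= /zeta setU1K. Qed.

Lemma caseC A T : e \notin A -> e \notin T ->
  lmul r (sb (e |: A)) (sb T) =
  if (e |: A) :&: T == set0 then sc (sgnST r (e |: A) T) (sb ((e |: A) :|: T)) else 0.
Proof.
move=> eA eT; rewrite sbE // (sbA eT) -setUA sbE; last by rewrite inE negb_or eA eT.
rewrite [e' \in A :|: T]inE.
case e'A: (e' \in A) => /=.
  by rewrite lmul0l; case: ifP => _; rewrite ?sc0r.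
rewrite lmul_scl lmul_basis.
case e'T: (e' \in T).
  by rewrite (@disj_mem _ e') ?setU11 // sc0r; case: ifP => _; rewrite ?sc0r.
rewrite !setI1U ?e'T //.
case: ifP => AT; rewrite ?sc0r // !scA -setUA; congr (sc _ _).
rewrite (sgnUl r _ (set1I0 (negbT e'A))) (sgnUl r _ (set1I0 eA)) (sgnUl r [set e] AT) (sgnUl r [set e'] AT).
set a := sgnST r A [set e]; set b := sgnST r A [set e'].
set c := sgnST r [set e'] T; set d := sgnST r A T.
set p := sgnST r [set e] T; set q := sgnST r T [set e]; set w := sgnST r T [set e'].
apply: (@fix4 _ _ (p * p * (q * q) * (w * w)) (q * p * (w * c))).
- by rewrite !sgn_sq !mulr1.
- by apply: sgn_swap2; rewrite ?e'T.
- ring.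
Qed.

Lemma caseD S B : e \notin S -> e \notin B ->
  lmul r (sb S) (sb (e |: B)) =
  if S :&: (e |: B) == set0 then sc (sgnST r S (e |: B)) (sb (S :|: (e |: B))) else 0.
Proof.
move=> eS eB; rewrite (sbA eS) sbE // setUCA sbE; last by rewrite inE negb_or eS eB.
rewrite [e' \in S :|: B]inE.
case e'B: (e' \in B) => /=.
  by rewrite lmul0r orbT; case: ifP => _; rewrite ?sc0r.
rewrite lmul_scr lmul_basis.
case e'S: (e' \in S) => /=.
  by rewrite (@disj_mem _ e') ?setU11 // sc0r; case: ifP => _; rewrite ?sc0r.
rewrite !setI1Ur ?e'S //.
case: ifP => SB; rewrite ?sc0r // !scA setUCA; congr (sc _ _).
rewrite (sgnUr r _ (set1I0 (negbT e'B))) (sgnUr r _ (set1I0 eB)) (sgnUl r [set e] SB) (sgnUl r [set e'] SB).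
set s := sgnST r S [set e].
apply: (@fix4 _ _ (s * s) 1).
- exact: sgn_sq.
- by [].
- ring.
Qed.

Lemma caseB A B : e \notin A -> e \notin B ->
  lmul r (sb (e |: A)) (sb (e |: B)) =
  if (e |: A) :&: (e |: B) == set0 then sc (sgnST r (e |: A) (e |: B)) (sb ((e |: A) :|: (e |: B))) else 0.
Proof.
move=> eA eB; rewrite (@disj_mem _ e) ?setU11 // !sbE //.
case: (e' \in A); rewrite ?lmul0l //.
case: (e' \in B); rewrite ?lmul0r // lmul_scl lmul_scr lmul_basis.
by rewrite (@disj_mem _ e') ?setU11 // !sc0r.
Qed.

Lemma Bmul_sb : Bmul r sb.
Proof.
move=> S T.
case eS: (e \in S); case eT: (e \in T).
- by rewrite -(setD1K eS) -(setD1K eT); apply: caseB; rewrite setD11.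
- by rewrite -(setD1K eS); apply: caseC; rewrite ?setD11 ?eT.
- by rewrite -(setD1K eT); apply: caseD; rewrite ?setD11 ?eS.
have nS : e \notin S by rewrite eS.
have nT : e \notin T by rewrite eT.
rewrite (sbA nS) (sbA nT) lmul_basis; case: ifP => _ //.
by rewrite sbA // inE eS eT.
Qed.

Definition Bf (S : {set E}) : Lam E' := Lmap Brho (sb S).
Lemma Bmul_f : Bmul r Bf.
Proof. exact: Bmul_comp Bmul_rho Bmul_sb. Qed.
Local Notation ff := (Lmap Bf).
Local Notation gg := (Lmap Biota).
Lemma ff_mul x y : ff (lmul r x y) = lmul r (ff x) (ff y).
Proof. by apply: Lmap_mul; exact: Bmul_f. Qed.
Lemma gg_mul x y : gg (lmul r x y) = lmul r (gg x) (gg y).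
Proof. by apply: Lmap_mul; exact: Bmul_iota. Qed.

Definition es : E' := Sub e' he'.
Definition phi (b : E) : E' := insubd es b.

Lemma val_phi b : val (phi b) = if b == e then e' else b.
Proof.
rewrite /phi; case: (eqVneq b e) => [->|nb].
  by rewrite /insubd insubF ?eqxx.
by rewrite insubdK.
Qed.

Lemma pre_set1 (b : E') : pre [set val b] = [set b].
Proof. by apply/setP=> y; rewrite !inE val_eqE. Qed.

Lemma ff_gen_e : ff (gen e) = sc sigma (gen es).
Proof.
rewrite gen_basis Lmap_basis /Bf /sb set11 in_set1 (negbTE he') /zeta setDv.
rewrite !sgn0l !mulr1 setU0 Lmap_sc Lmap_basis /Brho in_set1 eq_sym (negbTE he').
by rewrite (pre_set1 es).
Qed.

Lemma ff_gen b : ff (gen b) = sc (if b == e then sigma else 1) (gen (phi b)).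
Proof.
case: (eqVneq b e) => [->|nb].
  by rewrite ff_gen_e; congr (sc _ (gen _)); apply: val_inj; rewrite val_phi eqxx.
rewrite sc1 gen_basis Lmap_basis /Bf sbA; last by rewrite in_set1 eq_sym.
rewrite Lmap_basis /Brho in_set1 eq_sym (negbTE nb).
have -> : [set b] = [set val (phi b)] by rewrite val_phi (negbTE nb).
by rewrite pre_set1.
Qed.

Lemma ff_lone : ff (lone E) = lone E'.
Proof.
by rewrite basis_lone Lmap_basis /Bf sbA ?inE // Lmap_basis /Brho inE pre0.
Qed.

Lemma ff_prodl l : ff (prodl r l) = sc (sigma ^+ count (pred1 e) l) (prodl r (map phi l)).
Proof.
elim: l => [|b l IH]; first by rewrite /= expr0 sc1 !prodl_nil ff_lone.
rewrite /= !prodl_cons ff_mul ff_gen IH lmul_scl lmul_scr scA; congr (sc _ _).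
by case: eqP => _; rewrite ?add1n ?add0n ?exprS ?mul1r.
Qed.

Lemma gg_gen (b : E') : gg (gen b) = gen (val b).
Proof. by rewrite gen_basis Lmap_basis /Biota imset_set1. Qed.
Lemma gg_lone : gg (lone E') = lone E.
Proof. by rewrite basis_lone Lmap_basis /Biota imset0. Qed.
Lemma gg_prodl l : gg (prodl r l) = prodl r (map val l).
Proof.
elim: l => [|b l IH]; first by rewrite /= !prodl_nil gg_lone.
by rewrite /= !prodl_cons gg_mul gg_gen IH.
Qed.

Definition hc (t : E * (V * V)) : E' * (V * V) := (phi t.1, t.2).
Definition hv (t : E' * (V * V)) : E * (V * V) := (val t.1, t.2).

Hypothesis hpar : (ends e' == ends e) || (ends e' == ((ends e).2, (ends e).1)).
Hypothesis hloop : (ends e).1 != (ends e).2.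

Lemma circ_ff c : circuit ends c -> circuit (del_ends ends e) (map hc c).
Proof.
case/and3P => h1 h2 h3; apply/and3P; split.
- by rewrite size_map.
- by rewrite -!map_comp.
rewrite all_map; apply/allP => t tc /=; have := allP h3 t tc.
rewrite /del_ends val_phi; case: (eqVneq t.1 e) => [->|ne] //.
exact: par_pair hpar.
Qed.

Lemma circ_gg c : circuit (del_ends ends e) c -> circuit ends (map hv c).
Proof.
case/and3P => h1 h2 h3; apply/and3P; split.
- by rewrite size_map.
- by rewrite -!map_comp.
by rewrite all_map.
Qed.

Lemma gg_arnold c : gg (arnold (del_ends ends e) r c) = arnold ends r (map hv c).
Proof.
rewrite !arnoldE size_map Lmap_sum; apply: eq_big_nat => i _.
rewrite Lmap_sc gg_prodl; congr (sc _ (prodl r _)).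
  by rewrite /acoef /eps onth_map; case: (onth c i).
by rewrite -map_take -map_drop -map_cat -!map_comp.
Qed.

Lemma ff_arnold c : circuit ends c -> ff (arnold ends r c) =
  sc (sigma ^+ count (pred1 e) (map fst c)) (arnold (del_ends ends e) r (map hc c)).
Proof.
move=> hc0; have h3 := and3P hc0; case: h3 => _ _ h3.
rewrite !arnoldE size_map Lmap_sum sc_sumr; apply: eq_big_nat => i /andP[_ hi].
rewrite Lmap_sc ff_prodl !scA; congr (sc _ (prodl r _)); last first.
  by rewrite -map_take -map_drop -map_cat -!map_comp.
rewrite map_cat map_take map_drop.
have hi' : (i < size (map fst c))%N by rewrite size_map.
rewrite -(count_td (pred1 e) e hi') (nth_map (e, ends e)) //.
rewrite /acoef /sigma; case: (odd r); last by rewrite !expr1n mulr1 mul1r.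
rewrite /eps onth_map (onth_lt (e, ends e) hi) /=.
set t := nth (e, ends e) c i.
have ht := allP h3 t (mem_nth _ hi).
rewrite /del_ends val_phi exprD.
case: (eqVneq t.1 e) => [h1|h1] /=.
  rewrite h1 expr1; rewrite h1 in ht.
  rewrite (sign_pair hloop hpar ht); ring.
by rewrite expr0 mulr1 mulrC.
Qed.

Lemma ff_Biota (A : {set E'}) : ff (Biota A) = basis A.
Proof.
rewrite /Biota Lmap_basis /Bf sbA; last first.
  apply/imsetP => [[b _ h]]; move: (svalP b); by rewrite -h eqxx.
by rewrite Lmap_basis /Brho ifF ?pre_im //; apply/imsetP => [[b _ h]]; move: (svalP b); rewrite -h eqxx.
Qed.

Lemma ffgg y : ff (gg y) = y.
Proof.
have -> : gg y = \sum_S sc (y S) (Biota S) by [].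
rewrite Lmap_sum; under eq_bigr => S _ do rewrite Lmap_sc ff_Biota.
by rewrite -expand.
Qed.

Lemma gf_basis_ne S : e \notin S -> gg (ff (basis S)) = basis S.
Proof.
move=> eS; rewrite Lmap_basis /Bf sbA // Lmap_basis /Brho (negbTE eS).
by rewrite Lmap_basis /Biota im_pre.
Qed.

Definition c2 : seq (E * (V * V)) := [:: (e, ends e); (e', ((ends e).2, (ends e).1))].
Definition kappa : int := if odd r then (if ends e' == ends e then 1 else -1) else -1.

Lemma circ_c2 : circuit ends c2.
Proof.
rewrite /circuit /c2 /= eqxx /=.
move: hpar; case: (ends e) => a b /=.
move=> h; rewrite [_ || (ends e' == (a, b))]orbC h /rot /= eqxx /=.
by [].
Qed.

Lemma arnold_c2 : arnold ends r c2 = sc kappa (sc sigma (gen e') - gen e).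
Proof.
rewrite /arnold big_ord_recl big_ord_recl big_ord0 /= !prodl1.
rewrite /kappa /sigma /eps /=; case: (odd r).
  rewrite eqxx; case: (eqVneq (ends e') (ends e)) => h.
    rewrite h swap_neq //.
    by apply/ffunP => S; rewrite !ffunE; ring.
  move: hpar; rewrite (negbTE h) /= => ->.
  by apply/ffunP => S; rewrite !ffunE; ring.
by apply/ffunP => S; rewrite !ffunE; ring.
Qed.

Lemma kappa_sq : kappa * kappa = 1.
Proof. by rewrite /kappa; case: (odd r); case: (ends e' == ends e). Qed.

Lemma ggff x : inI ends r (gg (ff x) - x).
Proof.
have -> : gg (ff x) - x = \sum_S sc (x S) (gg (Bf S) - basis S).
  have -> : ff x = \sum_S sc (x S) (Bf S) by [].
  rewrite {2}(expand x) Lmap_sum -sumrB; apply: eq_bigr => S _.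
  by rewrite Lmap_sc scBr.
apply: inI_sum => S _; apply: inI_sc.
case eS: (e \in S); last by rewrite -(Lmap_basis Bf S) gf_basis_ne ?eS // subrr; apply: inI0.
rewrite -(Lmap_basis Bf S) (decomp r eS) !ff_mul ff_gen_e !gg_mul Lmap_sc gg_gen /=.
rewrite !gf_basis_ne; first last.
- by rewrite inE ltnn andbF.
- by rewrite inE ltnn andbF.
rewrite -lmulBl -lmulBr.
have -> : sc sigma (gen e') - gen e = sc kappa (arnold ends r c2).
  by rewrite arnold_c2 scA kappa_sq sc1.
rewrite lmul_scr -lmul_scl; apply: inI_gen; exact: circ_c2.
Qed.

Lemma main_iso : R_iso ends (del_ends ends e) r.
Proof.
exists ff, gg; split.
- split.
  + move=> x y hxy; rewrite -Lmap_sub; apply: inI_map hxy; first exact: Bmul_f.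
    move=> c hcc; exists (sigma ^+ count (pred1 e) (map fst c)), (map hc c).
    by split; [exact: circ_ff | exact: ff_arnold].
  + by move=> x y; rewrite Lmap_add subrr; apply: inI0.
  + by move=> x y; rewrite ff_mul subrr; apply: inI0.
  + by rewrite ff_lone subrr; apply: inI0.
- split.
  + move=> x y hxy; rewrite -Lmap_sub; apply: inI_map hxy; first exact: Bmul_iota.
    move=> c hcc; exists 1, (map hv c).
    by split; [exact: circ_gg | rewrite sc1 gg_arnold].
  + by move=> x y; rewrite Lmap_add subrr; apply: inI0.
  + by move=> x y; rewrite gg_mul subrr; apply: inI0.
  + by rewrite gg_lone subrr; apply: inI0.
- exact: ggff.
- by move=> y; rewrite ffgg subrr; apply: inI0.
Qed.

End Main.

Theorem mainTheorem4 (r : nat) (V E : finType) (ends : E -> V * V) (e : E) :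
  (1 <= r)%N ->
  (forall b : E, (ends b).1 != (ends b).2) ->
  (exists2 e' : E, e' != e &
     (ends e' == ends e) || (ends e' == ((ends e).2, (ends e).1))) ->
  R_iso ends (del_ends ends e) r.
Proof.
move=> _ hloop [e' he' hpar].
exact: (main_iso r he' hpar (hloop e)).
Qed.
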